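(* Fix $\delta\in\{0,1\}^m$, tolerances $\epsilon_{\mathrm a}\in\mathbb R$ and $\epsilon_{\mathrm r}\ge0$, and a $p$-simplex $\mathcal R\subseteq\Theta^*_\delta$ with vertices $v_1,\dots,v_{p+1}$. For each $i$ let $x_i$ be an optimal solution of the fixed-commutation problem with parameter $v_i$. For $\theta=\sum_i\alpha_iv_i\in\mathcal R$ (barycentric coordinates $\alpha_i\ge0$, $\sum_i\alpha_i=1$) let $x^*=\sum_i\alpha_ix_i$, $\hat V_\delta(\theta)=f(\theta,x^*,\delta)$ and $\bar V_\delta(\theta)=\sum_i\alpha_iV^*_\delta(v_i)$. Let $$\hat e_{\mathrm a}(\mathcal R)=\sup\{\bar V_\delta(\theta)-V^*_{\delta'}(\theta):\theta\in\mathcal R,\ \delta'\in\{0,1\}^m,\ \theta\in\Theta^*_{\delta'}\}.$$ Suppose that either $\hat e_{\mathrm a}(\mathcal R)\le\epsilon_{\mathrm a}$, or $\inf_{\theta\in\mathcal R}V^*(\theta)>0$ and $\hat e_{\mathrm r}(\mathcal R)\triangleq\hat e_{\mathrm a}(\mathcal R)/\inf_{\theta\in\mathcal R}V^*(\theta)\le\epsilon_{\mathrm r}$. Then for every $\theta\in\mathcal R$, $$\hat V_\delta(\theta)-V^*(\theta)\le\max\{\epsilon_{\mathrm a},\epsilon_{\mathrm r}V^*(\theta)\}.$$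
   Context: Let $p,n,m,d,l$ be positive integers and let $\mathcal K\subseteq\mathbb R^d$ be a convex cone that is a Cartesian product of convex cones. Let $f,g,h$ be functions on $\mathbb R^p\times\mathbb R^n\times\mathbb R^m$ with values in $\mathbb R$, $\mathbb R^l$, $\mathbb R^d$ respectively, such that for each fixed $\delta\in\{0,1\}^m$, $(\theta,x)\mapsto f(\theta,x,\delta)$ is jointly convex and $(\theta,x)\mapsto g(\theta,x,\delta)$, $h(\theta,x,\delta)$ are affine. For $\delta\in\{0,1\}^m$ and $\theta\in\mathbb R^p$, the fixed-commutation problem is: minimize $f(\theta,x,\delta)$ over $x\in\mathbb R^n$ subject to $g(\theta,x,\delta)=0$, $h(\theta,x,\delta)\in\mathcal K$; $V^*_\delta(\theta)\in\mathbb R\cup\{+\infty\}$ is its optimal value ($+\infty$ if infeasible) and $\Theta^*_\delta$ the set of $\theta$ where it is feasible. $V^*(\theta)=\min_{\delta\in\{0,1\}^m}V^*_\delta(\theta)$ is the optimal value of the mixed-integer problem minimizing jointly over $x$ and $\delta\in\{0,1\}^m$. *)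

(* Defs.v *)
From HB Require Import structures.
From mathcomp Require Import all_boot all_order all_algebra.
From mathcomp Require Import all_classical all_reals.
From mathcomp Require Import ereal.
Set Implicit Arguments. Unset Strict Implicit. Unset Printing Implicit Defensive.
Import Order.TTheory GRing.Theory Num.Theory.
Local Open Scope classical_set_scope.
Local Open Scope ring_scope.

Section MPDefs.
Variable R : realType.

Definition convex_cone (d : nat) (K : set 'rV[R]_d) : Prop :=
  forall x y, K x -> K y -> forall a b : R, 0 <= a -> 0 <= b -> K (a *: x + b *: y).

(* K is a Cartesian product of convex cones: the coordinates 0..d-1 are split
   into k consecutive blocks (block assignment blk, nondecreasing), and
   y \in K iff for every block j the part of y on block j (zero-padded) lies
   in the convex cone Kj j. *)
Definition block_part (d k : nat) (blk : 'I_d -> 'I_k) (j : 'I_k) (y : 'rV[R]_d)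
  : 'rV[R]_d := \row_i (if blk i == j then y 0 i else 0).

Definition product_of_convex_cones (d : nat) (K : set 'rV[R]_d) : Prop :=
  exists (k : nat) (blk : 'I_d -> 'I_k) (Kj : 'I_k -> set 'rV[R]_d),
    {homo blk : i j / (i <= j)%N >-> (i <= j)%N} /\
    (forall j, convex_cone (Kj j)) /\
    K = [set y | forall j, Kj j (block_part blk j y)].

Definition dvec (m : nat) (delta : {ffun 'I_m -> bool}) : 'rV[R]_m :=
  \row_i (delta i)%:R.

Definition jointly_convex (p n : nat) (F : 'rV[R]_p -> 'rV[R]_n -> R) : Prop :=
  forall th1 th2 x1 x2 (t : R), 0 <= t <= 1 ->
    F (t *: th1 + (1 - t) *: th2) (t *: x1 + (1 - t) *: x2)
      <= t * F th1 x1 + (1 - t) * F th2 x2.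

Definition affine2 (p n q : nat) (G : 'rV[R]_p -> 'rV[R]_n -> 'rV[R]_q) : Prop :=
  exists (A : 'M[R]_(p, q)) (B : 'M[R]_(n, q)) (c : 'rV[R]_q),
    forall th x, G th x = th *m A + x *m B + c.

Variables (p n m d l : nat).
Variables (f : 'rV[R]_p -> 'rV[R]_n -> 'rV[R]_m -> R)
          (g : 'rV[R]_p -> 'rV[R]_n -> 'rV[R]_m -> 'rV[R]_l)
          (h : 'rV[R]_p -> 'rV[R]_n -> 'rV[R]_m -> 'rV[R]_d)
          (K : set 'rV[R]_d).

Definition feasible (delta : {ffun 'I_m -> bool}) (th : 'rV[R]_p) (x : 'rV[R]_n)
  : Prop := g th x (dvec delta) = 0 /\ K (h th x (dvec delta)).

Definition optimal (delta : {ffun 'I_m -> bool}) (th : 'rV[R]_p) (x : 'rV[R]_n)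
  : Prop := feasible delta th x /\
    forall y, feasible delta th y -> f th x (dvec delta) <= f th y (dvec delta).

(* V*_delta(theta): optimal value (+oo if infeasible) *)
Definition Vstar_delta (delta : {ffun 'I_m -> bool}) (th : 'rV[R]_p) : \bar R :=
  ereal_inf [set e | exists x, feasible delta th x /\ e = (f th x (dvec delta))%:E].

Definition Theta_star (delta : {ffun 'I_m -> bool}) : set 'rV[R]_p :=
  [set th | exists x, feasible delta th x].

Definition Vstar (th : 'rV[R]_p) : \bar R :=
  \big[Order.min/+oo%E]_(delta : {ffun 'I_m -> bool}) Vstar_delta delta th.

Definition affinely_independent (v : 'I_p.+1 -> 'rV[R]_p) : Prop :=
  forall c : 'I_p.+1 -> R, \sum_i c i = 0 -> \sum_i c i *: v i = 0 ->
    forall i, c i = 0.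

Definition barycentric (alpha : 'I_p.+1 -> R) : Prop :=
  (forall i, 0 <= alpha i) /\ \sum_i alpha i = 1.

Definition bary_point (v : 'I_p.+1 -> 'rV[R]_p) (alpha : 'I_p.+1 -> R)
  : 'rV[R]_p := \sum_i alpha i *: v i.

Definition simplex (v : 'I_p.+1 -> 'rV[R]_p) : set 'rV[R]_p :=
  [set th | exists alpha, barycentric alpha /\ th = bary_point v alpha].

Definition xstar (xs : 'I_p.+1 -> 'rV[R]_n) (alpha : 'I_p.+1 -> R) : 'rV[R]_n :=
  \sum_i alpha i *: xs i.

Definition Vhat (delta : {ffun 'I_m -> bool}) (v : 'I_p.+1 -> 'rV[R]_p)
  (xs : 'I_p.+1 -> 'rV[R]_n) (alpha : 'I_p.+1 -> R) : R :=
  f (bary_point v alpha) (xstar xs alpha) (dvec delta).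

Definition Vbar (delta : {ffun 'I_m -> bool}) (v : 'I_p.+1 -> 'rV[R]_p)
  (alpha : 'I_p.+1 -> R) : \bar R :=
  (\sum_i (alpha i)%:E * Vstar_delta delta (v i))%E.

Definition ea_hat (delta : {ffun 'I_m -> bool}) (v : 'I_p.+1 -> 'rV[R]_p) : \bar R :=
  ereal_sup [set e | exists alpha delta', barycentric alpha /\
     Theta_star delta' (bary_point v alpha) /\
     e = (Vbar delta v alpha - Vstar_delta delta' (bary_point v alpha))%E].

Definition infV (v : 'I_p.+1 -> 'rV[R]_p) : \bar R :=
  ereal_inf [set e | exists th, simplex v th /\ e = Vstar th].

End MPDefs.

(* Main.v *)
Require Import Defs.
From HB Require Import structures.
From mathcomp Require Import all_boot all_order all_algebra.
From mathcomp Require Import all_classical all_reals.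
From mathcomp Require Import ereal.
Import Order.TTheory GRing.Theory Num.Theory.
Local Open Scope classical_set_scope.
Local Open Scope ring_scope.

Lemma sum0_nonneg (R : realType) (I : eqType) (s : seq I) (a : I -> R) :
  (forall i, 0 <= a i) -> \sum_(i <- s) a i = 0 -> forall i, i \in s -> a i = 0.
Proof.
move=> a0; elim: s => [|j s IH] //=; rewrite big_cons => /eqP.
rewrite paddr_eq0 ?a0 ?sumr_ge0 // => /andP[/eqP aj /eqP rs] i.
by rewrite in_cons => /orP[/eqP -> //|]; apply: IH.
Qed.

Lemma jensen (R : realType) (p n : nat) (F : 'rV[R]_p -> 'rV[R]_n -> R)
  (hF : jointly_convex F) (I : eqType) (s : seq I) (a : I -> R)
  (th : I -> 'rV[R]_p) (x : I -> 'rV[R]_n) :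
  (forall i, 0 <= a i) -> \sum_(i <- s) a i = 1 ->
  F (\sum_(i <- s) a i *: th i) (\sum_(i <- s) a i *: x i)
    <= \sum_(i <- s) a i * F (th i) (x i).
Proof.
elim: s a => [|j s IH] a a0; first by rewrite big_nil => /eqP; rewrite eq_sym oner_eq0.
rewrite !big_cons => hs.
set S := \sum_(i <- s) a i.
move: hs; rewrite -/S => hs.
have S0 : 0 <= S by apply: sumr_ge0.
have hS : S = 1 - a j by rewrite -hs addrAC subrr add0r.
have [Sz|Snz] := eqVneq S 0.
  have z := @sum0_nonneg R _ _ _ a0 Sz.
  have aj1 : a j = 1 by rewrite -hs Sz addr0.
  rewrite !big1_seq; first (rewrite !addr0 aj1 !scale1r mul1r //).
  - by move=> i /z ->; rewrite mul0r.
  - by move=> i /z ->; rewrite scale0r.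
  - by move=> i /z ->; rewrite scale0r.
pose b i := a i / S.
have Spos : 0 < S by rewrite lt0r Snz.
have hb : \sum_(i <- s) b i = 1 by rewrite /b -mulr_suml -/S divff.
have b0 : forall i, 0 <= b i by move=> i; rewrite /b divr_ge0.
have IH' := IH b b0 hb.
have eqv : forall (k : nat) (y : I -> 'rV[R]_k),
    \sum_(i <- s) a i *: y i = (1 - a j) *: \sum_(i <- s) b i *: y i.
  move=> k y; rewrite -hS scaler_sumr; apply: eq_bigr => i _.
  by rewrite scalerA /b mulrC divfK.
have eqF : \sum_(i <- s) a i * F (th i) (x i) =
    (1 - a j) * \sum_(i <- s) b i * F (th i) (x i).
  rewrite -hS mulr_sumr; apply: eq_bigr => i _.
  by rewrite mulrA /b (mulrC S) divfK.
rewrite (eqv _ th) (eqv _ x) eqF.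
apply: le_trans; first apply: hF.
  by rewrite a0 /= -subr_ge0 -hS.
rewrite lerD2l ler_wpM2l // -hS //.
Qed.

Lemma vstar_opt (R : realType) p n m d l f g h K delta th x :
  @optimal R p n m d l f g h K delta th x ->
  Vstar_delta f g h K delta th = (f th x (dvec R delta))%:E.
Proof.
move=> [fx opt]; apply/le_anti/andP; split.
  by apply: ereal_inf_lbound; exists x.
by apply: le_ereal_inf_tmp => _ [y [fy ->]]; rewrite lee_fin; apply: opt.
Qed.

Lemma vstar_feas (R : realType) p n m d l f g h K delta th :
  Vstar_delta f g h K delta th != +oo%E -> @Theta_star R p n m d l g h K delta th.
Proof.
apply: contraNP => nT; rewrite /Vstar_delta.
suff -> : [set e | exists x, feasible g h K delta th x /\
   e = (f th x (dvec R delta))%:E] = set0 by rewrite ereal_inf0.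
by apply/seteqP; split => // e [x [fx _]]; apply: nT; exists x.
Qed.

Lemma vstar_att (R : realType) p n m d l f g h K th :
  @Vstar R p n m d l f g h K th = +oo%E \/
  exists d0, Vstar f g h K th = Vstar_delta f g h K d0 th.
Proof.
rewrite /Vstar.
elim/big_ind: _ => [|x y|i _]; [by left| |by right; exists i].
case=> [->|[d1 ->]]; case=> [->|[d2 ->]].
- by left; rewrite minxx.
- by right; exists d2; rewrite /Order.min ltNge leey.
- by right; exists d1; rewrite minC /Order.min ltNge leey.
- by right; rewrite /Order.min; case: ifP => _; [exists d1|exists d2].
Qed.
Theorem theorem7 (R : realType) (p n m d l : nat)
  (f : 'rV[R]_p -> 'rV[R]_n -> 'rV[R]_m -> R)
  (g : 'rV[R]_p -> 'rV[R]_n -> 'rV[R]_m -> 'rV[R]_l)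
  (h : 'rV[R]_p -> 'rV[R]_n -> 'rV[R]_m -> 'rV[R]_d)
  (K : set 'rV[R]_d)
  (hp : (0 < p)%N) (hn : (0 < n)%N) (hm : (0 < m)%N) (hd : (0 < d)%N) (hl : (0 < l)%N)
  (hK : convex_cone K) (hKprod : product_of_convex_cones K)
  (hf : forall delta : {ffun 'I_m -> bool},
          jointly_convex (fun th x => f th x (dvec R delta)))
  (hg : forall delta : {ffun 'I_m -> bool},
          affine2 (fun th x => g th x (dvec R delta)))
  (hh : forall delta : {ffun 'I_m -> bool},
          affine2 (fun th x => h th x (dvec R delta)))
  (delta : {ffun 'I_m -> bool}) (eps_a eps_r : R) (heps_r : 0 <= eps_r)
  (v : 'I_p.+1 -> 'rV[R]_p) (hv : affinely_independent v)
  (hRsub : simplex v `<=` Theta_star g h K delta)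
  (xs : 'I_p.+1 -> 'rV[R]_n)
  (hxs : forall i, optimal f g h K delta (v i) (xs i))
  (htol : (ea_hat f g h K delta v <= eps_a%:E)%E \/
          ((0 < infV f g h K v)%E /\
           (ea_hat f g h K delta v / infV f g h K v <= eps_r%:E)%E)) :
  forall alpha : 'I_p.+1 -> R, barycentric alpha ->
    ((Vhat f delta v xs alpha)%:E - Vstar f g h K (bary_point v alpha)
      <= Order.max eps_a%:E (eps_r%:E * Vstar f g h K (bary_point v alpha)))%E.
Proof.
move=> alpha ha.
set th := bary_point v alpha.
set b := \sum_i alpha i * f (v i) (xs i) (dvec R delta).
have hVb : Vbar f g h K delta v alpha = b%:E.
  rewrite /Vbar /b -sumEFin; apply: eq_bigr => i _.
  by rewrite (vstar_opt _ _ _ _ _ _ _ _ _ _ _ _ _ (hxs i)) EFinM.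
have hle : Vhat f delta v xs alpha <= b.
  exact: (@jensen R _ _ _ (hf delta) _ (index_enum _) alpha v xs ha.1 ha.2).
have hinf : (infV f g h K v <= Vstar f g h K th)%E.
  by apply: ereal_inf_lbound; exists th; split => //; exists alpha.
have [Woo|[d0 Wd0]] := @vstar_att R p n m d l f g h K th.
  by rewrite Woo addeNy ?leNye.
rewrite Wd0; case WE : (Vstar_delta f g h K d0 th) => [w| |]; rewrite ?addeNy ?leNye //.
- have hT : Theta_star g h K d0 th by apply: (@vstar_feas R p n m d l f); rewrite WE.
  have h2 : ((b - w)%:E <= ea_hat f g h K delta v)%E.
    apply: ereal_sup_ubound; exists alpha, d0; split => //; split => //.
    by rewrite hVb -/th WE.
  rewrite le_max; apply/orP; case: htol => [h1|[h0 h1]].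
    left; rewrite lee_fin; have := le_trans h2 h1; rewrite lee_fin.
    by apply: le_trans; rewrite lerD2r.
  right; rewrite Wd0 WE in hinf.
  move: h0 h1 hinf; case: (infV f g h K v) => [i| |] //= i0 h1 iw.
  rewrite lte_fin in i0; rewrite lee_fin in iw.
  rewrite inver gt_eqF // lee_pdivrMr // in h1.
  have := le_trans h2 h1; rewrite -EFinM !lee_fin => hbi.
  apply: (le_trans _ (ler_wpM2l heps_r iw)).
  rewrite (le_trans _ hbi) // lerD2r //.
- have hT : Theta_star g h K d0 th by apply: (@vstar_feas R p n m d l f); rewrite WE.
  have h2 : (+oo <= ea_hat f g h K delta v)%E.
    apply: ereal_sup_ubound; exists alpha, d0; split => //; split => //.
    by rewrite hVb -/th WE.
  case: htol => [h1|[h0 h1]].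
    by have := le_trans h2 h1.
  rewrite Wd0 WE in hinf.
  by have := lt_le_trans h0 hinf.
Qed.
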